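(* For every $j\in\{1,\dots,N\}$ with $S_j\neq\emptyset$, let $V^{(j),\rm opt}$ be the optimal value of (P1) with pairs restricted to $\mathcal M^{\rm narrow}$ and metric $p$ replaced by $p_1^{(j)}$. Then $p_2^{(j-1)}(U_j^*,c_j^* )\ge V^{(j),\rm opt}/(T+1+\Delta+2J)$.
   Context: Setup as for problem (P1): users $\{1,\dots,K\}$ partitioned into groups $\mathcal G_1,\dots,\mathcal G_L$; $N$ RBs; chunks are vectors $c\in\{0,1\}^N$ whose ones form a nonempty contiguous block, ${\rm Tail}(c)$ the last index of $c$, chunks intersect if they share an index; $\mathcal U$ = nonempty $U\subseteq\{1,\dots,K\}$ with $|U|\le T$, $|U\cap\mathcal G_s|\le1\ \forall s$; pairs are elements of $\mathcal U\times\mathcal C$. Metrics $p\ge0$; weights $\beta^q\in[0,1]$ ($q=1,\dots,J$); binary weights $\alpha^q\in\{0,1\}$ ($q\in\mathcal I$) with $\sum_{q\in\mathcal I}\alpha^q(U,c)\le\Delta$ per pair. A set $F$ of pairs is feasible if each group meets $U$ for at most one element of $F$, each RB lies in $c$ for at most one element, $\sum_F\beta^q\le1$ ($q\le J$) and $\sum_F\alpha^q\le1$ ($q\in\mathcal I$); (P1) maximizes the sum of the metric over feasible $F$. Pairs $(U,c),(U',c')$ conflict if some group meets both $U,U'$, or $c,c'$ intersect, or some $q\in\mathcal I$ has $\alpha^q(U,c)=\alpha^q(U',c')=1$. $\mathcal M^{\rm narrow}$ = pairs with $\beta^q\le1/2$ for all $q\le J$; $\max_q\beta^q:=0$ if $J=0$;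 $(x)^+=\max\{x,0\}$. Recursion: $p_2^{(0)}=p$ on $\mathcal M^{\rm narrow}$. For $j=1,\dots,N$: let $(U_j^*,c_j^* )$ maximize $p_2^{(j-1)}$ over pairs of $\mathcal M^{\rm narrow}$ with ${\rm Tail}(c)=j$; $S_j=(U_j^*,c_j^* )$ if $p_2^{(j-1)}(U_j^*,c_j^* )>0$, else $S_j=\emptyset$. For $(U,c)\in\mathcal M^{\rm narrow}$, $p_1^{(j)}(U,c)=(p_2^{(j-1)}(U_j^*,c_j^* ))^+\mathbf 1[p_2^{(j-1)}(U,c)>0]$ if $(U,c)$ conflicts with $(U_j^*,c_j^* )$, and $p_1^{(j)}(U,c)=2(p_2^{(j-1)}(U_j^*,c_j^* ))^+\mathbf 1[p_2^{(j-1)}(U,c)>0]\max_{q\le J}\beta^q(U,c)$ otherwise; $p_2^{(j)}=p_2^{(j-1)}-p_1^{(j)}$. *)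

(* Defs.v *)
From HB Require Import structures.
From mathcomp Require Import all_boot all_order all_algebra.
Set Implicit Arguments. Unset Strict Implicit. Unset Printing Implicit Defensive.
Import Order.TTheory GRing.Theory Num.Theory.
Local Open Scope ring_scope.

Section Sched.
Variables (R : realFieldType) (K L N T J Delta : nat) (I : finType).
(* grp u = index of the group G_s containing user u *)
Variable grp : 'I_K -> 'I_L.

(* A chunk is given by its first and last RB (0-based ordinals), first <= last. *)
Definition chunk := ('I_N * 'I_N)%type.
Definition pair := ({set 'I_K} * chunk)%type.

Definition chunk_ok (c : chunk) : bool := (c.1 <= c.2)%N.
Definition in_chunk (i : 'I_N) (c : chunk) : bool := (c.1 <= i)%N && (i <= c.2)%N.
(* Tail, 1-based as in the paper *)
Definition tail (c : chunk) : nat := (c.2 : nat).+1.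
Definition chunks_intersect (c c' : chunk) : bool :=
  [exists i : 'I_N, in_chunk i c && in_chunk i c'].
Definition meets (s : 'I_L) (U : {set 'I_K}) : bool := [exists u in U, grp u == s].

Definition users_ok (U : {set 'I_K}) : bool :=
  [&& U != set0, (#|U| <= T)%N & [forall s : 'I_L, (#|[set u in U | grp u == s]| <= 1)%N]].

Definition pair_ok (x : pair) : bool := users_ok x.1 && chunk_ok x.2.

Variables (beta : 'I_J -> pair -> R) (alpha : I -> pair -> bool).

Definition narrow (x : pair) : bool := pair_ok x && [forall q, beta q x <= 2^-1].

Definition maxbeta (x : pair) : R := \big[Num.max/0]_(q < J) beta q x.

Definition conflict (x y : pair) : bool :=
  [|| [exists s : 'I_L, meets s x.1 && meets s y.1],
      chunks_intersect x.2 y.2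
    | [exists q : I, alpha q x && alpha q y]].

Definition feasible_narrow (F : {set pair}) : bool :=
  [&& [forall x in F, narrow x],
      [forall s : 'I_L, (#|[set x in F | meets s x.1]| <= 1)%N],
      [forall i : 'I_N, (#|[set x in F | in_chunk i x.2]| <= 1)%N],
      [forall q : 'I_J, \sum_(x in F) beta q x <= 1]
    & [forall q : I, (\sum_(x in F) (alpha q x : nat) <= 1)%N]].

Definition Vopt (m : pair -> R) : R :=
  \big[Num.max/0]_(F : {set pair} | feasible_narrow F) \sum_(x in F) m x.

Definition posp (r : R) : R := Num.max r 0.

(* one step of the recursion; [s] is the selected maximizer the pair chosen at step j,
   None if there is no narrow pair with tail j *)
Definition p1_step (prev : pair -> R) (s : option pair) (x : pair) : R :=
  match s with
  | None => 0
  | Some y =>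
      if 0 < prev x then
        (if conflict x y then posp (prev y) else 2 * posp (prev y) * maxbeta x)
      else 0
  end.

Variable p : pair -> R.

Fixpoint p2 (sel : nat -> option pair) (j : nat) : pair -> R :=
  match j with
  | 0 => p
  | j'.+1 => fun x => p2 sel j' x - p1_step (p2 sel j') (sel j'.+1) x
  end.

Definition p1 (sel : nat -> option pair) (j : nat) : pair -> R :=
  p1_step (p2 sel j.-1) (sel j).

Definition is_selection (sel : nat -> option pair) : Prop :=
  forall j, (1 <= j <= N)%N ->
    match sel j with
    | None => forall x, narrow x -> tail x.2 != j
    | Some y => [/\ narrow y, tail y.2 = j &
                   forall x, narrow x -> tail x.2 = j -> p2 sel j.-1 x <= p2 sel j.-1 y]
    end.

End Sched.

(* Main.v *)
Require Import Defs.
From HB Require Import structures.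
From mathcomp Require Import all_boot all_order all_algebra.
From mathcomp Require Import zify lra.
Import Order.TTheory GRing.Theory Num.Theory.
Local Open Scope ring_scope.

Lemma sumb_card (T : finType) (A : {set T}) (b : pred T) :
  (\sum_(x in A) (b x : nat) = #|[set x in A | b x]|)%N.
Proof.
rewrite (eq_bigr (fun x => if b x then 1%N else 0%N)); last by move=> x _; case: (b x).
by rewrite -big_mkcondr sum1_card cardsE.
Qed.

Section Proof.
Variables (R : realFieldType) (K L N T J Delta : nat) (I : finType)
  (grp : 'I_K -> 'I_L) (beta : 'I_J -> pair K N -> R) (alpha : I -> pair K N -> bool)
  (p : pair K N -> R).
Hypothesis hp : forall x, pair_ok T grp x -> 0 <= p x.
Hypothesis hbeta : forall q x, pair_ok T grp x -> 0 <= beta q x <= 1.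
Hypothesis halpha : forall x, pair_ok T grp x -> (\sum_(q : I) (alpha q x : nat) <= Delta)%N.
Variable sel : nat -> option (pair K N).
Hypothesis hsel : is_selection T grp beta alpha p sel.

Local Notation P := (p2 grp beta alpha p sel).

Lemma narrow_ok x : narrow T grp beta x -> pair_ok T grp x.
Proof. by case/andP. Qed.

Lemma maxbeta_ge0 x : 0 <= maxbeta beta x.
Proof.
rewrite /maxbeta; elim/big_rec: _ => // i acc _ h.
by rewrite le_max h orbT.
Qed.

Lemma maxbeta_le x : pair_ok T grp x -> maxbeta beta x <= \sum_q beta q x.
Proof.
move=> ok; rewrite /maxbeta; apply: bigmax_le.
  apply: sumr_ge0 => q _; by case/andP: (hbeta q x ok).
move=> i _; rewrite (bigD1 i) //= lerDl; apply: sumr_ge0 => q _.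
by case/andP: (hbeta q x ok).
Qed.

Lemma posp_ge (r : R) : r <= posp r.
Proof. by rewrite /posp le_max lexx. Qed.

Lemma posp_ge0 (r : R) : 0 <= posp r.
Proof. by rewrite /posp le_max lexx orbT. Qed.

Lemma P_step_le0 k x : P k x <= 0 -> P k.+1 x <= 0.
Proof.
move=> h /=; rewrite /p1_step; case: (sel k.+1) => [y|]; last by rewrite subr0.
by rewrite ltNge h /= subr0.
Qed.

Lemma killed x k : narrow T grp beta x -> (tail x.2 <= k)%N -> P k x <= 0.
Proof.
move=> nx; elim: k => [|k IH]; first by rewrite /tail.
rewrite leq_eqVlt => /orP[/eqP e|]; last by move=> h; apply: P_step_le0; apply: IH.
have hj : (1 <= k.+1 <= N)%N by rewrite ltnS leq0n /= -e /tail ltn_ord.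
move: (hsel k.+1 hj) => /=; rewrite /p1_step.
case: (sel k.+1) => [y [ny ty ymax]|]; last by move=> /(_ x nx); rewrite e eqxx.
case: ifP => [hx|]; last by rewrite subr0 => /negbT; rewrite -leNgt.
have cxy : conflict grp alpha x y.
  apply/orP; right; apply/orP; left; apply/existsP; exists x.2.2.
  have ex : (x.2.2 : nat) = y.2.2 by apply/eqP; rewrite -eqSS -/(tail x.2) -/(tail y.2) ty e.
  case/andP: (narrow_ok x nx) => _ cx; case/andP: (narrow_ok y ny) => _ cy.
  move: cx cy; rewrite /chunk_ok /in_chunk => cx cy.
  by rewrite cx leqnn ex cy leqnn.
rewrite cxy subr_le0; apply: le_trans (posp_ge _); apply: ymax => //.
Qed.

Lemma sumb_cardT (T0 : finType) (b : pred T0) :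
  (\sum_x (b x : nat) = #|[set x | b x]|)%N.
Proof.
rewrite (eq_bigr (fun x => if b x then 1%N else 0%N)); last by move=> x _; case: (b x).
by rewrite -big_mkcond sum1_card cardsE.
Qed.

Variables (j : nat) (y : pair K N).
Hypotheses (hj : (1 <= j <= N)%N) (hy : sel j = Some y) (hS : 0 < P j.-1 y).

Lemma y_facts : narrow T grp beta y /\ (y.2.2 : nat) = j.-1.
Proof.
move: (hsel j hj); rewrite hy => -[ny ty _]; split => //.
by move: ty; rewrite /tail => <-.
Qed.

Lemma count_bound F : feasible_narrow T grp beta alpha F ->
  (\sum_(x in F) (((0 < P j.-1 x)%R) && conflict grp alpha x y : nat) <= T + 1 + Delta)%N.
Proof.
case/and5P => h1 h2 h3 h4 h5.
have [ny ey] := y_facts.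
pose gs (x : pair K N) := (\sum_s (meets grp s x.1 && meets grp s y.1 : nat))%N.
pose ch (x : pair K N) := (in_chunk y.2.2 x.2 : nat).
pose aq (x : pair K N) := (\sum_q (alpha q x && alpha q y : nat))%N.
apply: (@leq_trans (\sum_(x in F) (gs x + ch x + aq x))%N).
  apply: leq_sum => x xF.
  have nx : narrow T grp beta x by move: (forallP h1 x); rewrite xF.
  case: (boolP (0 < P j.-1 x)) => //= hx.
  case hc: (conflict grp alpha x y) => //; move: hc; rewrite /conflict.
  case/or3P => [/existsP[s hs]|/existsP[i hi]|/existsP[q hq]].
  - rewrite -addnA; apply: leq_trans (leq_addr _ _).
    by rewrite /gs (bigD1 s) //= hs.
  - have tx : (j.-1 < tail x.2)%N.
      rewrite ltnNge; apply/negP => hle.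
      by move: (killed x j.-1 nx hle); rewrite leNgt hx.
    case/andP: hi => /andP[a1 a2] /andP[b1 b2].
    have c1 : in_chunk y.2.2 x.2 by rewrite /in_chunk (leq_trans a1 b2) ey -ltnS.
    rewrite /ch c1 /=; lia.
  - rewrite /aq (bigD1 q) //= hq /=; lia.
rewrite !big_split /=.
apply: leq_add; first apply: leq_add.
- rewrite /gs exchange_big /=.
  apply: (@leq_trans (\sum_s (meets grp s y.1 : nat))%N).
    apply: leq_sum => s _; case: (meets grp s y.1).
      by under eq_bigr do rewrite andbT; rewrite sumb_card; exact: (forallP h2 s).
    by rewrite big1 // => x _; rewrite andbF.
  rewrite sumb_cardT.
  case/andP: (narrow_ok y ny) => /and3P[_ hT _] _.
  apply: leq_trans hT; apply: leq_trans (leq_imset_card grp _).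
  apply: subset_leq_card; apply/subsetP => s; rewrite inE => /existsP[u /andP[uy /eqP <-]].
  exact: imset_f.
- by rewrite /ch sumb_card; exact: (forallP h3 y.2.2).
- rewrite /aq exchange_big /=.
  apply: leq_trans (halpha y (narrow_ok y ny)).
  apply: leq_sum => q _; case: (alpha q y).
    by under eq_bigr do rewrite andbT; exact: (forallP h5 q).
  by rewrite big1 // => x _; rewrite andbF.
Qed.

Lemma sum_bound F : feasible_narrow T grp beta alpha F ->
  \sum_(x in F) p1 grp beta alpha p sel j x <= P j.-1 y * (T + 1 + Delta + 2 * J)%:R.
Proof.
move=> hF; have hc := count_bound F hF.
case/and5P: hF => h1 h2 h3 h4 h5.
set v := P j.-1 y.
have hv : posp v = v by rewrite /posp; apply/max_idPl; apply: ltW.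
pose c (x : pair K N) := (((0 < P j.-1 x)%R) && conflict grp alpha x y : nat).
have pw : forall x, x \in F -> p1 grp beta alpha p sel j x <=
     v * (c x)%:R + 2 * v * \sum_q beta q x.
  move=> x xF.
  have nx : narrow T grp beta x by move: (forallP h1 x); rewrite xF.
  have sb0 : 0 <= \sum_q beta q x.
    by apply: sumr_ge0 => q _; case/andP: (hbeta q x (narrow_ok x nx)).
  have v0 : 0 < v by [].
  rewrite /p1 hy /p1_step /c hv.
  case: ifP => hx /=; last first.
    apply: addr_ge0; first by rewrite mulr_ge0 // ltW.
    by rewrite mulr_ge0 // mulr_ge0 // ltW.
  case: ifP => hcf /=.
    rewrite mulr1 lerDl; by rewrite mulr_ge0 // mulr_ge0 // ltW.
  rewrite mulr0 add0r; apply: ler_wpM2l; first by rewrite mulr_ge0 // ltW.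
  exact: maxbeta_le (narrow_ok x nx).
apply: le_trans; first by apply: ler_sum pw.
rewrite big_split /= -mulr_sumr -mulr_sumr -natr_sum.
rewrite exchange_big /=.
have sJ : \sum_q \sum_(x in F) beta q x <= J%:R.
  apply: le_trans (_ : \sum_(q < J) (1 : R) <= _).
    by apply: ler_sum => q _; exact: (forallP h4 q).
  by rewrite sumr_const card_ord.
have hc' : ((\sum_(x in F) c x)%:R <= (T + 1 + Delta)%:R :> R) by rewrite ler_nat.
rewrite natrD natrM mulrDr -mulrA.
have v0 : 0 <= v by apply: ltW.
apply: lerD; first exact: ler_wpM2l.
rewrite [2%:R * _]mulrC -mulrA; apply: ler_wpM2l => //.
by rewrite mulrC; apply: ler_wpM2l.
Qed.

End Proof.

Theorem lemma2 (R : realFieldType) (K L N T J Delta : nat) (I : finType)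
  (grp : 'I_K -> 'I_L) (beta : 'I_J -> pair K N -> R) (alpha : I -> pair K N -> bool)
  (p : pair K N -> R)
  (hp : forall x, pair_ok T grp x -> 0 <= p x)
  (hbeta : forall q x, pair_ok T grp x -> 0 <= beta q x <= 1)
  (halpha : forall x, pair_ok T grp x -> (\sum_(q : I) (alpha q x : nat) <= Delta)%N)
  (sel : nat -> option (pair K N))
  (hsel : is_selection T grp beta alpha p sel)
  (j : nat) (hj : (1 <= j <= N)%N) (y : pair K N)
  (hy : sel j = Some y) (hS : 0 < p2 grp beta alpha p sel j.-1 y) :
  Vopt T grp beta alpha (p1 grp beta alpha p sel j) / (T + 1 + Delta + 2 * J)%:R
    <= p2 grp beta alpha p sel j.-1 y.
Proof.
rewrite ler_pdivrMr; last by rewrite ltr0n; lia.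
rewrite /Vopt; apply: bigmax_le.
  by rewrite mulr_ge0 // ltW.
move=> F hF; exact: (@sum_bound _ _ _ _ _ _ _ _ _ _ _ _ hbeta halpha _ hsel _ _ hj hy hS F hF).
Qed.
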